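(* Let $U$ be a Hilbert space, $T: U\rightrightarrows U$, $(\hat u,\hat w)\in\operatorname{graph}T$, $N,M\in\mathcal{L}(U;U)$ with $M\ge0$, and $\gamma\in[0,1]$. Then $(N,\gamma M)$-subregularity of $T$ at $(\hat u,\hat w)$ implies $(\gamma M,N,M)$-partial subregularity at the same point. If $T^{-1}(\hat w)=\{\hat u\}$ is a singleton, these two properties are equivalent.
   Context: For $T\in\mathcal{L}(U;U)$: $\|x\|^2_T:=\langle Tx,x\rangle$, $\operatorname{dist}^2_T(z,A):=\inf_{u\in A}\|z-u\|^2_T$ ($\inf\emptyset=+\infty$). For $M,P,N\in\mathcal{L}(U;U)$ with $N\ge0$, $M\ge0$, $M\ge P$, $T$ is $(P,N,M)$-partially subregular at $(\hat u,\hat w)$ if there is a neighbourhood $\mathcal{U}\ni\hat u$ with $\operatorname{dist}^2_N(\hat w,T(u)) + \operatorname{dist}^2_{M-P}(u,T^{-1}(\hat w))\ge\operatorname{dist}^2_M(u,T^{-1}(\hat w))$ for all $u\in\mathcal{U}$. $T$ is $(N,M)$-subregular if it is $(M,N,M)$-partially subregular. *)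

(* Defs.v *)
From HB Require Import structures.
From mathcomp Require Import all_boot all_order all_algebra.
From mathcomp Require Import all_classical all_reals all_analysis.
Set Implicit Arguments. Unset Strict Implicit. Unset Printing Implicit Defensive.
Import Order.TTheory GRing.Theory Num.Theory.
Import numFieldNormedType.Exports.
Local Open Scope classical_set_scope.
Local Open Scope ring_scope.

(* A real Hilbert space: a complete normed space U whose norm is induced by a
   symmetric bilinear inner product. *)
Record inner_product (R : realType) (U : completeNormedModType R) := InnerProduct {
  inner :> U -> U -> R;
  inner_sym : forall x y, inner x y = inner y x;
  inner_addl : forall x y z, inner (x + y) z = inner x z + inner y z;
  inner_scalel : forall (a : R) x y, inner (a *: x) y = a * inner x y;
  inner_normE : forall x, inner x x = `|x| ^+ 2 }.

Section Defs.
Context {R : realType} {U : completeNormedModType R} (ip : @inner_product R U).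

Definition sqnorm (T : U -> U) (x : U) : R := ip (T x) x.

(* dist_T^2(z, A) := inf_{u in A} ||z - u||_T^2, with inf of the empty set = +oo *)
Definition dist2 (T : U -> U) (z : U) (A : set U) : \bar R :=
  ereal_inf [set (sqnorm T (z - u))%:E | u in A].

Definition psd (T : U -> U) : Prop := forall x, 0 <= sqnorm T x.

Definition loewner_le (P M : U -> U) : Prop := forall x, sqnorm P x <= sqnorm M x.

Definition inv_img (T : U -> set U) (w : U) : set U := [set u | T u w].

Definition partially_subregular (P N M : U -> U) (T : U -> set U) (uh wh : U) : Prop :=
  [/\ psd N, psd M, loewner_le P M &
   exists V : set U, nbhs uh V /\
     forall u, V u ->
       (dist2 N wh (T u) + dist2 (fun x => (M x - P x)%R) u (inv_img T wh)
         >= dist2 M u (inv_img T wh))%E].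

Definition subregular (N M : U -> U) (T : U -> set U) (uh wh : U) : Prop :=
  partially_subregular M N M T uh wh.

End Defs.

(* Main.v *)
Require Import Defs.
From HB Require Import structures.
From mathcomp Require Import all_boot all_order all_algebra.
From mathcomp Require Import all_classical all_reals all_analysis.
From mathcomp Require Import lra.
Import Order.TTheory GRing.Theory Num.Theory.
Import numFieldNormedType.Exports.
Local Open Scope classical_set_scope.
Local Open Scope ring_scope.

Section Aux.
Context {R : realType} {U : completeNormedModType R} (ip : @inner_product R U).

Lemma ip0l y : ip 0 y = 0.
Proof. by rewrite -(scale0r (0 : U)) inner_scalel mul0r. Qed.

Lemma dist2_set1 (X : U -> U) u a : dist2 ip X u [set a] = (sqnorm ip X (u - a))%:E.
Proof. by rewrite /dist2 image_set1 ereal_inf1. Qed.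

Lemma dist2_fin (M : U -> U) u S a : psd ip M -> S a ->
  dist2 ip M u S = (fine (dist2 ip M u S))%:E.
Proof.
move=> pM Sa; rewrite fineK // ge0_fin_numE.
  apply: (le_lt_trans (y := (sqnorm ip M (u - a))%:E)); last by rewrite ltry.
  by apply: ge_ereal_inf; exists (sqnorm ip M (u - a))%:E => //; exists a.
by apply/ereal_infP => _ [s Ss <-]; rewrite lee_fin.
Qed.

Lemma dist2_scale (M X : U -> U) (c : R) u S a : psd ip M -> S a -> 0 <= c ->
  (forall y, sqnorm ip X y = c * sqnorm ip M y) ->
  ((c * fine (dist2 ip M u S))%:E <= dist2 ip X u S)%E.
Proof.
move=> pM Sa c0 HX; apply/ereal_infP => _ [s Ss <-]; rewrite HX lee_fin.
apply: ler_wpM2l => //.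
rewrite -lee_fin -(@dist2_fin M u S a pM Sa); apply: ge_ereal_inf.
by exists (sqnorm ip M (u - s))%:E => //; exists s.
Qed.
End Aux.

Theorem corollary4p6 (R : realType) (U : completeNormedModType R)
  (ip : @inner_product R U) (T : U -> set U) (uh wh : U)
  (N M : {linear U -> U}) (gamma : R) :
  T uh wh ->
  continuous N -> continuous M ->
  psd ip M ->
  0 <= gamma <= 1 ->
  (subregular ip N (fun x => gamma *: M x) T uh wh ->
     partially_subregular ip (fun x => gamma *: M x) N M T uh wh) /\
  (inv_img T wh = [set uh] ->
     (subregular ip N (fun x => gamma *: M x) T uh wh <->
      partially_subregular ip (fun x => gamma *: M x) N M T uh wh)).
Proof.
move=> Tuh _ _ pM /andP[g0 g1].
have sqg : forall y, sqnorm ip (fun x => gamma *: M x) y = gamma * sqnorm ip M y.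
  by move=> y; rewrite /sqnorm inner_scalel.
have sq1g : forall y, sqnorm ip (fun x => M x - gamma *: M x) y
    = (1 - gamma) * sqnorm ip M y.
  by move=> y; rewrite /sqnorm -{1}(scale1r (M y)) -scalerBl inner_scalel.
have sq0 : forall y, sqnorm ip (fun x => gamma *: M x - gamma *: M x) y = 0.
  by move=> y; rewrite /sqnorm subrr ip0l.
have Suh : inv_img T wh uh by [].
have lw : loewner_le ip (fun x => gamma *: M x) M.
  by move=> x; rewrite sqg; apply: ler_piMl.
have pgM : psd ip (fun x => gamma *: M x).
  by move=> x; rewrite sqg; apply: mulr_ge0.
have P1 : subregular ip N (fun x => gamma *: M x) T uh wh ->
     partially_subregular ip (fun x => gamma *: M x) N M T uh wh.
  case=> pN _ _ [V [nV HV]]; split => //; exists V; split => // u Vu.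
  have H := HV u Vu.
  have d0 : (dist2 ip (fun x => (gamma *: M x - gamma *: M x)%R) u (inv_img T wh) <= 0)%E.
    apply: ge_ereal_inf; exists (sqnorm ip (fun x => gamma *: M x - gamma *: M x) (u - uh))%:E.
      by exists uh.
    by rewrite sq0.
  have E := @dist2_fin _ _ ip M u _ uh pM Suh.
  set d := fine (dist2 ip M u (inv_img T wh)) in E.
  rewrite E (_ : d = gamma * d + (1 - gamma) * d); last by rewrite mulrBl mul1r addrC subrK.
  have g1' : 0 <= 1 - gamma by rewrite subr_ge0.
  rewrite EFinD; apply: leeD; last exact: dist2_scale pM Suh g1' sq1g.
  have := @dist2_scale _ _ ip M _ gamma u _ uh pM Suh g0 sqg; rewrite -/d => h1.
  apply: (le_trans h1).
  apply: (le_trans H); rewrite -[X in (_ <= X)%E]adde0; exact: leeD2l.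
split => // S1; split => //.
case=> pN _ _ [V [nV HV]]; split => //; exists V; split => // u Vu.
have := HV u Vu; rewrite S1 !dist2_set1 sq0 adde0 sqg sq1g.
case: (dist2 ip N wh (T u)) => [r||] //=; last (move=> _; exact: leey).
move=> h; move: h; rewrite -EFinD !lee_fin => h.
set s := sqnorm ip M (u - uh) in h *; lra.
Qed.
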